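(* For any graph $G$ with no isolated vertex, order $n$ and maximum degree $\Delta$, $$\left\lceil\frac{2n}{\Delta+1}\right\rceil\le\gamma_{(2,1,0)}(G)\le\min\{\gamma_{\times2}(G)-|L(G)|+|S(G)|,\;2\gamma(G)\}.$$
   Context: All graphs are finite and simple; $N(v)$ is the open neighbourhood and $N[v]=N(v)\cup\{v\}$. $\gamma_{(2,1,0)}(G)$ is the minimum of $\sum_v f(v)$ over functions $f:V(G)\to\{0,1,2\}$ such that $\sum_{u\in N(v)}f(u)\ge2$ whenever $f(v)=0$ and $\sum_{u\in N(v)}f(u)\ge1$ whenever $f(v)=1$. $\gamma(G)$ is the domination number and $\gamma_{\times2}(G)$ is the minimum size of $D\subseteq V(G)$ with $|N[v]\cap D|\ge2$ for every $v\in V(G)$. $L(G)$ is the set of leaves (degree-one vertices) and $S(G)$ the set of support vertices (vertices adjacent to a leaf). *)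

(* Defs.v *)
From mathcomp Require Import all_boot all_order all_algebra.
Set Implicit Arguments. Unset Strict Implicit. Unset Printing Implicit Defensive.

(* A finite simple graph: vertex type T : finType, adjacency e : rel T,
   required symmetric and irreflexive in the theorem. *)
Section Graph.
Variables (T : finType) (e : rel T).

Definition nbhd (v : T) : {set T} := [set u | e v u].
Definition cnbhd (v : T) : {set T} := v |: nbhd v.
Definition deg (v : T) : nat := #|nbhd v|.
Definition maxdeg : nat := \max_(v : T) deg v.
Definition no_isolated : Prop := forall v : T, 0 < deg v.

Definition leaves : {set T} := [set v | deg v == 1].
Definition supports : {set T} := [set v | [exists u, (u \in leaves) && e v u]].

Definition weight (f : {ffun T -> 'I_3}) : nat := \sum_(v : T) (f v : nat).
Definition nbsum (f : {ffun T -> 'I_3}) (v : T) : nat := \sum_(u in nbhd v) (f u : nat).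
Definition is_210df (f : {ffun T -> 'I_3}) : bool :=
  [forall v, ((f v : nat) == 0) ==> (2 <= nbsum f v)] &&
  [forall v, ((f v : nat) == 1) ==> (1 <= nbsum f v)].
Definition gamma210 : nat := \big[minn/(2 * #|T|).+1]_(f | is_210df f) weight f.

Definition dominating (D : {set T}) : bool := [forall v, (v \in D) || [exists u in D, e v u]].
Definition gamma : nat := \big[minn/#|T|.+1]_(D | dominating D) #|D|.

Definition double_dominating (D : {set T}) : bool := [forall v, 2 <= #|cnbhd v :&: D|].
Definition gamma_x2 : nat := \big[minn/#|T|.+1]_(D | double_dominating D) #|D|.
End Graph.

Definition ceil_div (m d : nat) : nat := (m + d.-1) %/ d.

(* Main.v *)
Require Import Defs.
From mathcomp Require Import all_boot all_order all_algebra.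
From mathcomp Require Import zify.
Import Order.TTheory GRing.Theory Num.Theory.

Lemma bigmin_le (I : finType) (P : pred I) (F : I -> nat) idx i :
  P i -> \big[minn/idx]_(j | P j) F j <= F i.
Proof.
move=> Pi; have : i \in index_enum I by rewrite mem_index_enum.
elim: (index_enum I) => [|j r IH] //; rewrite inE big_cons.
case/orP=> [/eqP<-|ir]; first by rewrite Pi geq_minl.
case: (P j); last exact: IH.
by rewrite geq_min IH ?orbT.
Qed.

Lemma minn_case (a b : nat) : minn a b = a \/ minn a b = b.
Proof. rewrite /minn; case: ifP; auto. Qed.

Section Main.
Variables (T : finType) (e : rel T).
Hypotheses (esym : symmetric e) (eirr : irreflexive e) (noiso : no_isolated e).

Lemma mk210 (g : T -> nat) :
  (forall v, g v <= 2) ->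
  (forall v, g v = 0 -> 2 <= \sum_(u in nbhd e v) g u) ->
  (forall v, g v = 1 -> 1 <= \sum_(u in nbhd e v) g u) ->
  gamma210 e <= \sum_v g v.
Proof.
move=> g2 H0 H1.
pose f : {ffun T -> 'I_3} := [ffun v => inord (g v)].
have fE : forall v, (f v : nat) = g v by move=> v; rewrite ffunE inordK // ltnS.
have Hf : is_210df e f.
  apply/andP; split; apply/forallP => v; apply/implyP; rewrite fE /nbsum => /eqP Hv;
  under eq_bigr do rewrite fE; auto.
rewrite /gamma210; apply: leq_trans (bigmin_le _ _ _ _ _ Hf) _.
by rewrite /weight; apply eq_leq; apply eq_bigr => v _; rewrite fE.
Qed.

Lemma sum_pick (A : {set T}) (g : T -> nat) u : u \in A -> g u <= \sum_(x in A) g x.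
Proof. by move=> uA; rewrite (bigD1 u) //= leq_addr. Qed.

Lemma card_nbhd_le v : deg e v <= maxdeg e.
Proof. rewrite /maxdeg; exact: leq_bigmax. Qed.

Lemma lower (f : {ffun T -> 'I_3}) : is_210df e f ->
  2 * #|T| <= (maxdeg e).+1 * weight f.
Proof.
case/andP=> /forallP F0 /forallP F1.
have h1 : forall v, 2 <= f v + nbsum e f v.
  move=> v; move: (F0 v) (F1 v) (ltn_ord (f v)).
  case: (nat_of_ord (f v)) => [|[|[|k]]] //=; lia.
have h2 : \sum_v nbsum e f v <= maxdeg e * weight f.
  rewrite /weight big_distrr /=.
  have -> : \sum_v nbsum e f v = \sum_u deg e u * f u.
    rewrite /nbsum.
    under eq_bigr do rewrite big_mkcond /=.
    rewrite exchange_big /=; apply eq_bigr => u _.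
    rewrite -big_mkcond /= sum_nat_const /deg; congr (_ * _); apply: eq_card => x.
    rewrite unfold_in /=; change ((u \in nbhd e x) = (x \in nbhd e u)); by rewrite !inE esym.
  by apply leq_sum => u _; rewrite leq_mul2r card_nbhd_le orbT.
have h3 : 2 * #|T| <= weight f + \sum_v nbsum e f v.
  rewrite /weight -big_split /= -sum1_card big_distrr /=.
  by apply leq_sum => v _; rewrite muln1.
rewrite mulSn; lia.
Qed.

Lemma gamma210_le2n : gamma210 e <= 2 * #|T|.
Proof.
have := @mk210 (fun _ => 2) (fun _ => leqnn 2) (fun v (h : 2 = 0) => ltac:(discriminate))
  (fun v (h : 2 = 1) => ltac:(discriminate)).
by rewrite sum_nat_const cardE /= -cardE mulnC.
Qed.

Lemma dom_bound (D : {set T}) : dominating e D -> gamma210 e <= 2 * #|D|.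
Proof.
move/forallP=> HD.
pose g := fun v => if v \in D then 2 else 0.
have -> : 2 * #|D| = \sum_v g v.
  by rewrite /g -big_mkcond /= sum_nat_const mulnC.
apply: mk210 => v; rewrite /g.
- by case: ifP.
- case: ifP => // vD _; move: (HD v); rewrite vD /= => /existsP [u /andP [uD evu]].
  have : g u <= \sum_(x in nbhd e v) g x by apply: sum_pick; rewrite inE.
  by rewrite /g uD.
- by case: ifP.
Qed.

Lemma gamma_bound : gamma210 e <= 2 * gamma e.
Proof.
rewrite /gamma; apply: (big_ind (fun x => gamma210 e <= 2 * x)).
- apply: leq_trans gamma210_le2n _; lia.
- by move=> x y hx hy; case: (minn_case x y) => ->.
- exact: dom_bound.
Qed.

Lemma setT_x2 : double_dominating e setT.
Proof.
apply/forallP => v; rewrite setIT /cnbhd cardsU1.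
have -> : v \notin nbhd e v by rewrite inE eirr.
by have := noiso v; rewrite /deg.
Qed.

Lemma gamma_x2_le : gamma_x2 e <= #|T|.
Proof.
rewrite /gamma_x2; apply: leq_trans (bigmin_le _ _ _ _ _ setT_x2) _.
by rewrite cardsT.
Qed.

Lemma full_sub (A D : {set T}) : #|A| <= #|A :&: D| -> A \subset D.
Proof.
move=> h; apply/setIidPl/eqP; rewrite eqEcard h andbT; exact: subsetIl.
Qed.

Lemma leafP v : v \in leaves e -> exists u, nbhd e v = [set u].
Proof. by rewrite inE => /cards1P. Qed.

Lemma x2_bound (D : {set T}) : double_dominating e D ->
  gamma210 e + #|leaves e| <= #|D| + #|supports e|.
Proof.
move/forallP=> HD.
set L := leaves e; set S := supports e.
have cnb_leaf : forall v u, nbhd e v = [set u] -> cnbhd e v \subset D.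
  move=> v u hv; apply: full_sub; apply: leq_trans (HD v).
  by rewrite /cnbhd cardsU1 hv cards1; case: (_ \notin _).
have subL : forall v, v \in L -> v \in D.
  move=> v /leafP [u hu]; have := cnb_leaf _ _ hu => /subsetP; apply.
  by rewrite /cnbhd setU11.
have subS : forall v, v \in S -> v \in D.
  move=> v; rewrite inE => /existsP [w /andP [wL evw]].
  have [u hu] := leafP _ wL; have := cnb_leaf _ _ hu => /subsetP; apply.
  have : v \in nbhd e w by rewrite inE esym.
  by rewrite hu inE => /eqP ->; rewrite /cnbhd hu !inE eqxx orbT.
have inS : forall v u, u \in L -> e v u -> v \in S.
  by move=> v u uL evu; rewrite inE; apply/existsP; exists u; rewrite uL.
pose g := fun v => if v \in S then (if v \in L then 1 else 2)
                   else if v \in L then 0 else if v \in D then 1 else 0.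
have gpos : forall v u, v \notin S -> e v u -> u \in D -> 1 <= g u.
  move=> v u vS evu uD; rewrite /g; case: ifP => uS; first by case: ifP.
  case: ifP => uL; last by rewrite uD.
  by rewrite (inS v u uL evu) in vS.
have sumND : forall v, v \notin S -> #|nbhd e v :&: D| <= \sum_(u in nbhd e v) g u.
  move=> v vS; rewrite -sum1_card big_mkcond [X in _ <= X]big_mkcond /=.
  apply: leq_sum => u _; rewrite in_setI; case evu: (u \in nbhd e v) => //=.
  case uD: (u \in D) => //; apply: (gpos v) => //; by move: evu; rewrite inE.
have cnbc : forall v, #|cnbhd e v :&: D| <= (v \in D) + #|nbhd e v :&: D|.
  move=> v; case vD: (v \in D).
    apply: leq_trans (subset_leq_card (_ : _ \subset v |: (nbhd e v :&: D))) _.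
      by apply/subsetP => x; rewrite !inE => /andP [/orP [->|->] ->]; rewrite ?orbT.
    by rewrite cardsU1; case: (_ \notin _).
  apply: subset_leq_card; apply/subsetP => x; rewrite !inE => /andP [/orP [/eqP ->|->] xD] //.
  by rewrite vD in xD.
have -> : #|D| + #|S| = \sum_v g v + #|L|.
  rewrite -!sum1_card !(big_mkcond (fun i => i \in _)) /= -!big_split /=.
  apply: eq_bigr => v _; rewrite /g.
  move: (subL v) (subS v); case: (v \in L); case: (v \in S); case: (v \in D) => //= h1 h2;
  first [discriminate (h1 isT) | discriminate (h2 isT)].
rewrite leq_add2r; apply: mk210 => v; rewrite {1}/g.
- by repeat case: ifP.
- case: ifP => vS; first by case: ifP.
  case: ifP => vL.
  + move=> _; have [u hu] := leafP _ vL.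
    have : u \in nbhd e v by rewrite hu set11.
    rewrite inE => evu.
    have uS : u \in S by apply: (inS u v vL); rewrite esym.
    have uL : u \notin L.
      by apply/negP => uL; rewrite (inS v u uL evu) in vS.
    have := sum_pick (nbhd e v) g u; rewrite /g uS (negbTE uL).
    by apply; rewrite inE.
  + case: ifP => // vD _; apply: leq_trans (sumND v _); last by rewrite vS.
    have := HD v; have := cnbc v; rewrite vD; lia.
- case: ifP => vS.
  + case: ifP => // vL _.
    have [u hu] := leafP _ vL.
    have : u \in nbhd e v by rewrite hu set11.
    rewrite inE => evu.
    move: vS; rewrite inE => /existsP [w /andP [wL evw]].
    have : w \in nbhd e v by rewrite inE.
    rewrite {1}hu inE => /eqP wu; subst w.
    have uS : u \in S by apply: (inS u v vL); rewrite esym.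
    have h := sum_pick (nbhd e v) g u; apply: leq_trans (h _); last by rewrite inE.
    by rewrite /g uS; case: ifP.
  + case: ifP => // vL; case: ifP => // vD _.
    apply: leq_trans (sumND v _); last by rewrite vS.
    have := HD v; have := cnbc v; rewrite vD; lia.
Qed.

Lemma x2_main : gamma210 e + #|leaves e| <= gamma_x2 e + #|supports e|.
Proof.
have := gamma_x2_le; rewrite /gamma_x2.
apply: (big_ind (fun x => x <= #|T| -> gamma210 e + #|leaves e| <= x + #|supports e|)).
- by rewrite ltnn.
- by move=> x y hx hy; case: (minn_case x y) => ->.
- by move=> D hD _; exact: x2_bound.
Qed.

Lemma lower_main : ceil_div (2 * #|T|) (maxdeg e).+1 <= gamma210 e.
Proof.
rewrite /gamma210; apply: (big_ind (fun x => ceil_div (2 * #|T|) (maxdeg e).+1 <= x)).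
- rewrite /ceil_div -ltnS ltn_divLR //; lia.
- by move=> x y hx hy; case: (minn_case x y) => ->.
- move=> f hf; have := lower _ hf; rewrite /ceil_div => h.
  rewrite -ltnS ltn_divLR //; lia.
Qed.

End Main.

Theorem theorem36 (T : finType) (e : rel T)
  (esym : symmetric e) (eirr : irreflexive e) (noiso : no_isolated e) :
  ceil_div (2 * #|T|) (maxdeg e).+1 <= gamma210 e /\
  ((gamma210 e)%:Z <= Num.min ((gamma_x2 e)%:Z - (#|leaves e|)%:Z + (#|supports e|)%:Z)
                            ((2 * gamma e)%N%:Z))%R.
Proof.
split; first exact: lower_main.
have h1 := @x2_main T e esym eirr noiso.
have h2 := @gamma_bound T e.
rewrite le_min; apply/andP; split; lia.
Qed.
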